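(* Let $C$ be a nondegenerate correlator on the smooth real vector bundle $E\to M$. Then $C$ induces a canonical metric $(\cdot,\cdot)_C$ on $E$ and a connection $\nabla^C$ on $E$ compatible with this metric, described as follows: if $\mathcal O\subset M$ is a coordinate neighborhood with coordinates $(x^i)$ and $\underline e:\underline{\mathbb R}^r_{\mathcal O}\to E|_{\mathcal O}$ is a $(\cdot,\cdot)_C$-orthonormal frame, then in this frame $\nabla^C=d+\sum_i\Gamma_i(\underline e)dx^i$, where the skew-symmetric $r\times r$ matrices are $\Gamma_i(\underline e)_y=-\partial_{x^i}T(\underline e)_{x,y}|_{x=y}$. This is well defined: for any smooth $g:\mathcal O\to O(r)$ one has $\Gamma(\underline e\cdot g)=g^{-1}dg+g^{-1}\Gamma(\underline e)g$, where $\Gamma(\underline e)=\sum_i\Gamma_i(\underline e)dx^i$, so the connections defined via different orthonormal frames coincide.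
   Context: A correlator on $E$ is a smooth section $C$ of $E\boxtimes E$ over $M\times M$, identified with bilinear maps $C_{x,y}:E_x^*\times E_y^*\to\mathbb R$, which is symmetric ($C_{x,y}(u^*,v^* )=C_{y,x}(v^*,u^* )$) with each $C_{x,x}$ nonnegative definite; nondegenerate means each $C_{x,x}$ is positive definite. The metric $(\cdot,\cdot)_C$ on $E$ is the dual of the inner product $C_{x,x}$ on $E_x^*$. The tunneling map $T_{x,y}\in\mathrm{Hom}(E_y,E_x)$ is defined by $\langle u^*,T_{x,y}v\rangle=C_{x,y}(u^*,v^\flat)$, $v^\flat$ the $(\cdot,\cdot)_C$-dual of $v$. For an orthonormal frame $\underline e$, $T(\underline e)_{x,y}:=\underline e(x)^{-1}T_{x,y}\underline e(y)\in\mathrm{End}(\mathbb R^r)$. The expression $d+\Gamma$ acts on $\mathbb R^r$-valued functions (coordinates of sections in the frame) by $s\mapsto ds+\Gamma s$. *)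

(* Defs.v *)
(* Local (coordinate-chart) formalization. *)
From HB Require Import structures.
From mathcomp Require Import all_boot all_order all_algebra.
From mathcomp Require Import all_classical all_reals all_analysis.
Set Implicit Arguments. Unset Strict Implicit. Unset Printing Implicit Defensive.
Import Order.TTheory GRing.Theory Num.Theory.
Import numFieldNormedType.Exports.
Local Open Scope classical_set_scope.
Local Open Scope ring_scope.

Section Smooth.
Variable R : realType.

Fixpoint Ck_on (V W : normedModType R) (k : nat) (O : set V) (f : V -> W)
  : Prop :=
  match k with
  | 0 => forall x, O x -> {for x, continuous f}
  | k'.+1 => (forall x, O x -> {for x, continuous f}) /\
             (forall x v, O x -> derivable f x v) /\
             (forall v, Ck_on k' O (fun x => 'D_v f x))
  end.

Definition smooth_on (V W : normedModType R) (O : set V) (f : V -> W) :=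
  forall k, Ck_on k O f.

Variables (n r : nat).

Definition coord_dir (i : 'I_n) : 'rV[R]_n := delta_mx 0 i.

(* The correlator C is given, in a fixed smooth local trivialization of E
   over the chart O, by K x y : 'M_r, with C_{x,y}(a,b) = a^T (K x y) b
   (covectors written as column vectors of their coordinates in the dual
   frame). *)

Definition posdef (A : 'M[R]_r) :=
  forall u : 'cV[R]_r, u != 0 -> 0 < ((u^T *m A *m u) ord0 ord0).

(* Gram matrix of the metric (.,.)_C on E_x : dual of the inner product
   C_{x,x} on E_x^*. *)
Definition corr_metric (K : 'rV[R]_n -> 'rV[R]_n -> 'M[R]_r) x : 'M[R]_r :=
  invmx (K x x).

Definition flat (K : 'rV[R]_n -> 'rV[R]_n -> 'M[R]_r) y (v : 'cV[R]_r)
  : 'cV[R]_r := corr_metric K y *m v.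

(* Tunneling map T_{x,y} : E_y -> E_x, <a, T v> = C_{x,y}(a, v^flat) *)
Definition tunneling (K : 'rV[R]_n -> 'rV[R]_n -> 'M[R]_r) x y : 'M[R]_r :=
  K x y *m corr_metric K y.

(* A frame e : column j of e x is the j-th frame vector at x *)
Definition orthonormal_frame (K : 'rV[R]_n -> 'rV[R]_n -> 'M[R]_r)
  (O : set 'rV[R]_n) (e : 'rV[R]_n -> 'M[R]_r) :=
  forall x, O x -> e x \in unitmx /\ (e x)^T *m corr_metric K x *m e x = 1%:M.

Definition tunneling_frame (K : 'rV[R]_n -> 'rV[R]_n -> 'M[R]_r)
  (e : 'rV[R]_n -> 'M[R]_r) x y : 'M[R]_r :=
  invmx (e x) *m tunneling K x y *m e y.

Definition Gamma (K : 'rV[R]_n -> 'rV[R]_n -> 'M[R]_r)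
  (e : 'rV[R]_n -> 'M[R]_r) (i : 'I_n) y : 'M[R]_r :=
  - 'D_(coord_dir i) (fun x => tunneling_frame K e x y) y.

(* (d + Gamma) applied in direction x^i to a section with coordinates s
   in the frame e *)
Definition covD (K : 'rV[R]_n -> 'rV[R]_n -> 'M[R]_r)
  (e : 'rV[R]_n -> 'M[R]_r) (i : 'I_n) (s : 'rV[R]_n -> 'cV[R]_r) y
  : 'cV[R]_r :=
  'D_(coord_dir i) s y + Gamma K e i y *m s y.

End Smooth.
Arguments coord_dir {R n} i.

(* Main.v *)
Require Import Defs.
From HB Require Import structures.
From mathcomp Require Import all_boot all_order all_algebra.
From mathcomp Require Import all_classical all_reals all_analysis.
From mathcomp Require Import ring lra.
Import Order.TTheory GRing.Theory Num.Theory.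
Import numFieldNormedType.Exports.
Local Open Scope classical_set_scope.
Local Open Scope ring_scope.

Section Aux.
Variables (R : realType) (V : normedModType R).

Lemma dmulmx {m n p} (A : V -> 'M[R]_(m,n)) (B : V -> 'M[R]_(n,p)) y v :
  derivable A y v -> derivable B y v ->
  derivable (fun x => A x *m B x) y v /\
  'D_v (fun x => A x *m B x) y = 'D_v A y *m B y + A y *m 'D_v B y.
Proof.
move=> dA dB.
have dAe := (derivable_mxP A y v).1 dA.
have dBe := (derivable_mxP B y v).1 dB.
have E i j : (fun x => (A x *m B x) i j) =
   \sum_(k < n) ((fun x => A x i k) * (fun x => B x k j)).
  by rewrite fct_sumE; apply/funext => x; rewrite mxE.
have dk i j k : derivable ((fun x => A x i k) * (fun x => B x k j)) y v.
  exact: derivableM.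
have dij i j : derivable (fun x => (A x *m B x) i j) y v.
  by rewrite E; apply: derivable_sum.
have dAB : derivable (fun x => A x *m B x) y v by apply/derivable_mxP.
split => //.
rewrite derive_mx //; apply/matrixP => i j.
rewrite !mxE E derive_sum // (derive_mx dA) (derive_mx dB) -big_split /=.
apply: eq_bigr => k _; rewrite deriveM // !mxE /= addrC.
by rewrite /GRing.scale /= [B y k j * _]mulrC.
Qed.

Arguments dmulmx {m n p A B y v}.

Lemma dtrmx {m n} (A : V -> 'M[R]_(m,n)) y v :
  derivable A y v ->
  derivable (fun x => (A x)^T) y v /\
  'D_v (fun x => (A x)^T) y = ('D_v A y)^T.
Proof.
move=> dA; have dAe := (derivable_mxP A y v).1 dA.
have dT : derivable (fun x => (A x)^T) y v.
  apply/derivable_mxP => i j.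
  have -> : (fun x => (A x)^T i j) = (fun x => A x j i).
    by apply/funext => x; rewrite mxE.
  exact: dAe.
split => //; rewrite derive_mx // (derive_mx dA); apply/matrixP => i j.
rewrite !mxE; congr (derive _ y v); apply/funext => x; by rewrite mxE.
Qed.


Arguments dtrmx {m n A y v}.

Lemma dbsum (I : Type) (r : seq I) (P : pred I) (F : I -> V -> R) y v :
  (forall i, derivable (F i) y v) ->
  derivable (fun x => \sum_(i <- r | P i) F i x) y v.
Proof.
move=> dF; rewrite -fct_sumE.
apply: (big_ind (fun f => derivable f y v)) => //.
by move=> f g; apply: derivableD.
Qed.

Lemma dbprod (I : Type) (r : seq I) (P : pred I) (F : I -> V -> R) y v :
  (forall i, derivable (F i) y v) ->
  derivable (fun x => \prod_(i <- r | P i) F i x) y v.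
Proof.
move=> dF; rewrite -fct_prodE.
apply: (big_ind (fun f => derivable f y v)) => //.
by move=> f g; apply: derivableM.
Qed.

Lemma ddet {n} (A : V -> 'M[R]_n) y v :
  derivable A y v -> derivable (fun x => \det (A x)) y v.
Proof.
move=> dA; have dAe := (derivable_mxP A y v).1 dA.
rewrite /determinant; apply: dbsum => s.
apply: derivableM; first exact: derivable_cst.
by apply: dbprod => i; apply: dAe.
Qed.

Lemma dinvmx {n} (A : V -> 'M[R]_n) y v :
  derivable A y v -> (\forall x \near y, A x \in unitmx) ->
  derivable (fun x => invmx (A x)) y v.
Proof.
move=> dA nU; have dAe := (derivable_mxP A y v).1 dA.
have uy : A y \in unitmx by exact: nbhs_singleton nU.
apply: (@near_eq_derivable _ _ _ (fun x => (\det (A x))^-1 *: \adj (A x))).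
  by near=> x; rewrite /invmx (near nU x).
apply/derivable_mxP => i j.
have -> : (fun x => ((\det (A x))^-1 *: \adj (A x)) i j) =
   (fun x => (\det (A x))^-1) * ((cst ((-1) ^+ (j + i) : R)) *
     (fun x => \det (row' j (col' i (A x))))).
  by apply/funext => x; rewrite !mxE.
apply: derivableM; first apply: derivableV.
- by rewrite -unitfE -unitmxE.
- exact: ddet.
apply: derivableM; first exact: derivable_cst.
apply: ddet; apply/derivable_mxP => k l.
have -> : (fun x => row' j (col' i (A x)) k l) = (fun x => A x (lift j k) (lift i l)).
  by apply/funext => x; rewrite !mxE.
exact: dAe.
Unshelve. all: by end_near.
Qed.

Arguments dinvmx {n A y v}.

End Aux.


Arguments dmulmx {R V m n p A B y v}.
Arguments dtrmx {R V m n A y v}.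
Arguments dinvmx {R V n A y v}.

Section Aux2.
Variables (R : realType) (V : normedModType R).

Lemma dinvmx_val {n} (A : V -> 'M[R]_n) y v :
  derivable A y v -> (\forall x \near y, A x \in unitmx) ->
  'D_v (fun x => invmx (A x)) y = - (invmx (A y) *m 'D_v A y *m invmx (A y)).
Proof.
move=> dA nU; have uy : A y \in unitmx by exact: nbhs_singleton nU.
have dC := dinvmx dA nU.
have [_ D] := dmulmx dC dA.
have : 'D_v (fun x => invmx (A x) *m A x) y = 0.
  rewrite (@near_eq_derive _ _ _ _ (cst 1%:M)) ?derive_cst //.
  by near=> x; rewrite mulVmx // (near nU x).
rewrite D => /eqP; rewrite addr_eq0 => /eqP E.
have -> : 'D_v (fun x => invmx (A x)) y =
   'D_v (fun x => invmx (A x)) y *m A y *m invmx (A y) by rewrite mulmxK.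
by rewrite E mulNmx.
Unshelve. all: by end_near.
Qed.

Variable W : normedModType R.

Lemma quot_pair_l (F : V * V -> W) a b v :
  (fun h : R => h^-1 *: ((F \o shift (a, b)) (h *: (v, 0)) - F (a, b))) =
  (fun h : R => h^-1 *: (((fun x => F (x, b)) \o shift a) (h *: v) - F (a, b))).
Proof.
apply/funext => h /=.
have -> : h *: (v, 0) + (a, b) = (h *: v + a, b) :> V * V.
  by apply/pair_equal_spec; split => //=; rewrite scaler0 add0r.
by [].
Qed.

Lemma quot_pair_r (F : V * V -> W) a b v :
  (fun h : R => h^-1 *: ((F \o shift (a, b)) (h *: (0, v)) - F (a, b))) =
  (fun h : R => h^-1 *: (((fun x => F (a, x)) \o shift b) (h *: v) - F (a, b))).
Proof.
apply/funext => h /=.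
have -> : h *: (0, v) + (a, b) = (a, h *: v + b) :> V * V.
  by apply/pair_equal_spec; split => //=; rewrite scaler0 add0r.
by [].
Qed.

Lemma quot_pair_d (F : V * V -> W) a v :
  (fun h : R => h^-1 *: ((F \o shift (a, a)) (h *: (v, v)) - F (a, a))) =
  (fun h : R => h^-1 *: (((fun x => F (x, x)) \o shift a) (h *: v) - F (a, a))).
Proof. by []. Qed.

Lemma pair_l (F : V * V -> W) a b v :
  (derivable F (a, b) (v, 0) <-> derivable (fun x => F (x, b)) a v) /\
  'D_(v, 0) F (a, b) = 'D_v (fun x => F (x, b)) a.
Proof. by rewrite /derivable /derive quot_pair_l. Qed.

Lemma pair_r (F : V * V -> W) a b v :
  (derivable F (a, b) (0, v) <-> derivable (fun x => F (a, x)) b v) /\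
  'D_(0, v) F (a, b) = 'D_v (fun x => F (a, x)) b.
Proof. by rewrite /derivable /derive quot_pair_r. Qed.

Lemma pair_d (F : V * V -> W) a v :
  (derivable F (a, a) (v, v) <-> derivable (fun x => F (x, x)) a v) /\
  'D_(v, v) F (a, a) = 'D_v (fun x => F (x, x)) a.
Proof. by rewrite /derivable /derive quot_pair_d. Qed.

End Aux2.


Section Aux3.
Variables (R : realType) (U : normedModType R).

Lemma phi_is_derive (G : U -> R) b w s : derivable G (s *: w + b) w ->
  is_derive s 1 (fun t => G (t *: w + b)) ('D_w G (s *: w + b)).
Proof.
move=> dG.
have E : (fun t : R => t^-1 *: (((fun t => G (t *: w + b)) \o shift s) (t *: 1)
             - (fun t => G (t *: w + b)) s)) =
         (fun t : R => t^-1 *: ((G \o shift (s *: w + b)) (t *: w) - G (s *: w + b))).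
  apply/funext => t /=.
  have -> : t *: (1:R) = t by rewrite /GRing.scale /= mulr1.
  by rewrite scalerDl addrA.
by apply: DeriveDef; rewrite /derivable /derive E.
Qed.

Lemma Dadd (G : U -> R) (a u w : U) :
  (\forall z \near a, derivable G z w) ->
  {for a, continuous (fun z => 'D_w G z)} ->
  derivable G a u ->
  derivable G a (u + w) /\ 'D_(u + w) G a = 'D_u G a + 'D_w G a.
Proof.
move=> dGn cG dGu.
suff C : (fun h : R => h^-1 *: ((G \o shift a) (h *: (u + w)) - G a)) @ 0^'
           --> 'D_u G a + 'D_w G a.
  split; first by apply/cvg_ex; eexists; exact: C.
  exact: cvg_lim C.
have E : (fun h : R => h^-1 *: ((G \o shift a) (h *: (u + w)) - G a)) =
   (fun h : R => h^-1 *: ((G \o shift a) (h *: u) - G a)) +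
   (fun h : R => h^-1 *: (G (h *: w + (h *: u + a)) - G (h *: u + a))).
  apply/funext => h /=; rewrite addrfctE -scalerDr; congr (_ *: _).
  have -> : h *: (u + w) + a = h *: w + (h *: u + a).
    by rewrite scalerDr -addrA addrCA.
  lra.
rewrite E; apply: cvgD; first exact: dGu.
apply/cvgrPdist_lt => e e0.
have : \forall z \near a, derivable G z w /\ `|'D_w G a - 'D_w G z| < e.
  have H : \forall z \near a, `|'D_w G a - 'D_w G z| < e.
    by move/cvgrPdist_lt: cG; apply.
  by near=> z; split; [exact: (near dGn z)|exact: (near H z)].
move=> /nbhs_ballP [d d0 Hd].
pose M := `|u| + `|w| + 1.
have M0 : 0 < M by rewrite /M ltr_pwDr // addr_ge0.
near=> h.
have hn0 : h != 0 by near: h; exact: nbhs_dnbhs_neq.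
have hb : `|h| < d / M by near: h; apply: dnbhs0_lt; exact: divr_gt0.
have inball : forall s, `|s| <= `|h| ->
    derivable G (s *: w + (h *: u + a)) w /\
    `|'D_w G a - 'D_w G (s *: w + (h *: u + a))| < e.
  move=> s hs; apply: Hd; rewrite -ball_normE /ball_ /=.
  have -> : a - (s *: w + (h *: u + a)) = - (s *: w + h *: u).
    by rewrite addrA opprD addrCA subrr addr0.
  rewrite normrN (le_lt_trans (ler_normD _ _)) // !normrZ.
  have hM : `|h| * M < d by rewrite -ltr_pdivlMr.
  apply: le_lt_trans hM; rewrite /M.
  have := normr_ge0 w; have := normr_ge0 u; have := normr_ge0 h; nra.
pose phi := fun t => G (t *: w + (h *: u + a)).
have phid : forall t : R, `|t| <= `|h| ->
    is_derive t 1 phi ('D_w G (t *: w + (h *: u + a))).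
  by move=> t /inball [dd _]; apply: phi_is_derive.
have phi0 : phi 0 = G (h *: u + a) by rewrite /phi scale0r add0r.
have [c hc Ec] : exists2 c, `|c| <= `|h| &
    G (h *: w + (h *: u + a)) - G (h *: u + a) = 'D_w G (c *: w + (h *: u + a)) * h.
  have cont : forall lo hi : R, lo <= hi -> `|lo| <= `|h| -> `|hi| <= `|h| ->
      {within `[lo, hi], continuous phi}.
    move=> lo hi lh l1 h1; apply: continuous_in_subspaceT => x.
    rewrite inE /= in_itv /= => /andP[x1 x2].
    have xb : `|x| <= `|h|.
      move: l1 h1; rewrite !ler_norml => /andP[? ?] /andP[? ?]; apply/andP; split; lra.
    move: (phid x xb) => [dx _].
    exact/differentiable_continuous/derivable1_diffP.
  case: (ltgtP h 0) => [hlt|hgt|heq]; last by rewrite heq eqxx in hn0.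
  - have [|x|] := @MVT_segment R phi (fun t => 'D_w G (t *: w + (h *: u + a))) h 0 (ltW hlt).
    + move=> x; rewrite in_itv /= => /andP[x1 x2]; apply: phid.
      by rewrite (ltr0_norm hlt) (ltr0_norm x2); lra.
    + by apply: cont => //; [exact: ltW|rewrite normr0].
    move=> c; rewrite in_itv /= => /andP[c1 c2] Ec; exists c.
      by rewrite (ltr0_norm hlt) ler_norml; apply/andP; split; lra.
    by rewrite /= -/(phi h) -phi0 -opprB Ec sub0r mulrN opprK.
  - have [|x|] := @MVT_segment R phi (fun t => 'D_w G (t *: w + (h *: u + a))) 0 h (ltW hgt).
    + move=> x; rewrite in_itv /= => /andP[x1 x2]; apply: phid.
      by rewrite (gtr0_norm hgt) (gtr0_norm x1); lra.
    + by apply: cont => //; [exact: ltW|rewrite normr0].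
    move=> c; rewrite in_itv /= => /andP[c1 c2] Ec; exists c.
      by rewrite (gtr0_norm hgt) ler_norml; apply/andP; split; lra.
    by rewrite /= -/(phi h) -phi0 Ec subr0.
rewrite /= Ec.
have -> : h^-1 *: ('D_w G (c *: w + (h *: u + a)) * h) = 'D_w G (c *: w + (h *: u + a)).
  by rewrite /GRing.scale /= mulrC -mulrA mulfV // mulr1.
exact: (inball c hc).2.
Unshelve. all: by end_near.
Qed.

End Aux3.


Arguments dmulmx {R V m n p A B y v}.
Arguments dtrmx {R V m n A y v}.
Arguments dinvmx {R V n A y v}.

Lemma inv_eq (R : comUnitRingType) k (A B : 'M[R]_k) : A *m B = 1%:M -> invmx B = A.
Proof.
move=> AB; have [_ uB] := mulmx1_unit AB.
by rewrite -[invmx B]mul1mx -AB mulmxK.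
Qed.

Arguments inv_eq {R k A B}.

Section Frame.
Variables (R : realType) (n r : nat) (O : set 'rV[R]_n)
  (K : 'rV[R]_n -> 'rV[R]_n -> 'M[R]_r) (e : 'rV[R]_n -> 'M[R]_r).
Hypothesis Hsym : forall x y, O x -> O y -> (K x y)^T = K y x.
Hypothesis Hon : orthonormal_frame K O e.

Lemma frame_facts x : O x ->
  [/\ e x \in unitmx, K x x \in unitmx,
      invmx (e x) = (e x)^T *m invmx (K x x),
      K x x = e x *m (e x)^T &
      (invmx (e x))^T = invmx (K x x) *m e x].
Proof.
move=> Ox; have [ue H] := Hon _ Ox; rewrite /corr_metric in H.
have P : invmx (e x) = (e x)^T *m invmx (K x x) by exact: inv_eq H.
have H2 : e x *m (e x)^T *m invmx (K x x) = 1%:M.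
  by rewrite -mulmxA -P mulmxV.
have uG : invmx (K x x) \in unitmx by have [] := mulmx1_unit H2.
have uK : K x x \in unitmx by rewrite -unitmx_inv.
have KE : K x x = e x *m (e x)^T by rewrite -(inv_eq H2) invmxK.
split => //.
rewrite P trmx_mul trmxK trmx_inv.
by rewrite Hsym.
Qed.

End Frame.


Arguments dmulmx {R V m n p A B y v}.
Arguments dtrmx {R V m n A y v}.
Arguments dinvmx {R V n A y v}.
Arguments dinvmx_val {R V n A y v}.
Arguments pair_l {R V W}.
Arguments pair_r {R V W}.
Arguments pair_d {R V W}.
Arguments Dadd {R U G a u w}.
Arguments frame_facts {R n r O K e} Hsym Hon {x}.

Lemma zid (M : zmodType) (a b d : M) : -( -a + (b + a - d)) = -b + d.
Proof. by rewrite opprD opprK opprB addrC -addrA opprD subrK addrC. Qed.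
Lemma zid2 (M : zmodType) (a b c : M) : a + b = a + - c + (b + c).
Proof. by rewrite addrCA subrK addrC. Qed.

Section Main.
Variables (R : realType) (n r : nat) (O : set 'rV[R]_n)
  (K : 'rV[R]_n -> 'rV[R]_n -> 'M[R]_r) (e : 'rV[R]_n -> 'M[R]_r).
Hypothesis Oo : open O.
Hypothesis HK : smooth_on (O `*` O) (fun p : 'rV[R]_n * 'rV[R]_n => K p.1 p.2).
Hypothesis Hsym : forall x y, O x -> O y -> (K x y)^T = K y x.
Hypothesis He : smooth_on O e.
Hypothesis Hon : orthonormal_frame K O e.

Let F := fun p : 'rV[R]_n * 'rV[R]_n => K p.1 p.2.

Lemma nO {y} : O y -> \forall x \near y, O x.
Proof. by move=> Oy; apply: open_nbhs_nbhs; split. Qed.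

Lemma nOO {y} : O y -> \forall z \near (y, y), (O `*` O) z.
Proof. by move=> Oy; exists (O, O) => //=; split; apply: nO. Qed.

Lemma dF {z} w : (O `*` O) z -> derivable F z w.
Proof. by have [_ [d _]] := HK 1%N; apply: d. Qed.

Lemma dK1 {y} v : O y -> derivable (fun x => K x y) y v.
Proof. by move=> Oy; exact: (pair_l F y y v).1.1 (dF (z:=(y,y)) (v, 0) (conj Oy Oy)). Qed.

Lemma dK2 {y} v : O y -> derivable (fun x => K y x) y v.
Proof. by move=> Oy; exact: (pair_r F y y v).1.1 (dF (z:=(y,y)) (0, v) (conj Oy Oy)). Qed.

Lemma de {y} v : O y -> derivable e y v.
Proof. by have [_ [d _]] := He 1%N; move=> Oy; apply: d. Qed.

Lemma nU {y} : O y -> \forall x \near y, e x \in unitmx.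
Proof.
move=> Oy; have := nO Oy; apply: filterS => x Ox.
by have [] := frame_facts Hsym Hon Ox.
Qed.

Lemma dP {y} v : O y -> derivable (fun x => invmx (e x)) y v.
Proof. by move=> Oy; apply: dinvmx (de v Oy) (nU Oy). Qed.

Lemma DP {y} v : O y -> 'D_v (fun x => invmx (e x)) y =
   - (invmx (e y) *m 'D_v e y *m invmx (e y)).
Proof. by move=> Oy; apply: dinvmx_val (de v Oy) (nU Oy). Qed.

Lemma Kd_split y v : O y -> 'D_v (fun x => K x x) y =
  'D_v (fun x => K x y) y + 'D_v (fun x => K y x) y.
Proof.
move=> Oy.
have E1 : 'D_v (fun x => K x x) y = 'D_(v, v) F (y, y) := esym (pair_d F y v).2.
have E2 : 'D_v (fun x => K x y) y = 'D_(v, 0) F (y, y) := esym (pair_l F y y v).2.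
have E3 : 'D_v (fun x => K y x) y = 'D_(0, v) F (y, y) := esym (pair_r F y y v).2.
rewrite E1 E2 E3.
have vv : (v, v) = (v, 0) + (0, v) :> 'rV[R]_n * 'rV[R]_n.
  by apply/pair_equal_spec; split => /=; rewrite ?addr0 ?add0r.
have Oyy : (O `*` O) (y, y) by split.
rewrite vv !derive_mx; try exact: dF.
apply/matrixP => a b; rewrite !mxE.
have h1 : \forall z \near (y, y), derivable (fun p => F p a b) z (0, v).
  apply: filterS (nOO Oy) => z Oz.
  exact: (derivable_mxP F z (0, v)).1 (dF (0, v) Oz) a b.
have h3 : derivable (fun p => F p a b) (y, y) (v, 0).
  exact: (derivable_mxP F (y, y) (v, 0)).1 (dF (v, 0) Oyy) a b.
have h2 : {for (y, y), continuous (fun z => 'D_(0, v) (fun p => F p a b) z)}.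
  have [_ [_ dd]] := HK 2%N; have [cD _] := dd (0, v).
  have Hg : {for (y, y), continuous (fun z => ('D_(0, v) F z) a b)}.
    apply: (@continuous_comp _ _ _ (fun z => 'D_(0, v) F z) (fun M => M a b)).
      exact: cD.
    exact: coord_continuous.
  have E : \forall z \near (y, y),
      'D_(0, v) (fun p => F p a b) z = ('D_(0, v) F z) a b.
    by apply: filterS (nOO Oy) => z Oz; rewrite (derive_mx (dF (0, v) Oz)) mxE.
  have E0 := nbhs_singleton E.
  rewrite /prop_for /continuous_at; cbv beta; rewrite E0.
  apply: cvg_trans Hg; apply: near_eq_cvg.
  by near=> z; rewrite (near E z).
by have [_ ->] := Dadd h1 h2 h3.
Unshelve. all: by end_near.
Qed.


Lemma Kd_e {y} v : O y -> 'D_v (fun x => K x x) y =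
  'D_v e y *m (e y)^T + e y *m ('D_v e y)^T.
Proof.
move=> Oy.
have [d1 D1] := dtrmx (de v Oy).
have [_ D2] := dmulmx (de v Oy) d1.
rewrite (@near_eq_derive _ _ _ _ (fun x => e x *m (e x)^T)); last first.
  by apply: filterS (nO Oy) => x Ox; case: (frame_facts Hsym Hon Ox).
by rewrite D2 D1.
Qed.

Lemma K2_T {y} v : O y -> 'D_v (fun x => K y x) y = ('D_v (fun x => K x y) y)^T.
Proof.
move=> Oy; have [_ D] := dtrmx (dK1 v Oy).
rewrite (@near_eq_derive _ _ _ _ (fun x => (K x y)^T)) ?D //.
by apply: filterS (nO Oy) => x Ox; rewrite Hsym.
Qed.

Lemma Te {y} v : O y ->
  [/\ derivable (fun x => tunneling_frame K e x y) y v,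
      tunneling_frame K e y y = 1%:M &
      'D_v (fun x => tunneling_frame K e x y) y =
        - (invmx (e y) *m 'D_v e y) +
        invmx (e y) *m 'D_v (fun x => K x y) y *m (invmx (e y))^T].
Proof.
move=> Oy.
have [ue uK Pe KE PT] := frame_facts Hsym Hon Oy.
pose Q := invmx (K y y) *m e y.
have ET : (fun x => tunneling_frame K e x y) = (fun x => (invmx (e x) *m K x y) *m Q).
  by apply/funext => x; rewrite /tunneling_frame /tunneling /corr_metric /Q !mulmxA.
have dc : derivable (fun _ : 'rV[R]_n => Q) y v := derivable_cst Q y v.
have [d1 D1] := dmulmx (dP v Oy) (dK1 v Oy).
have [d2 D2] := dmulmx d1 dc.
cbv beta in d2; cbv beta in D2.
have C0 : 'D_v (fun _ : 'rV[R]_n => Q) y = 0 := derive_cst Q y v.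
rewrite ET; split.
- exact: d2.
- by rewrite /tunneling_frame /tunneling /corr_metric mulmxV // mulmx1 mulVmx.
- rewrite D2 C0 mulmx0 addr0 D1 (DP v Oy) mulmxDl !mulNmx /Q -!mulmxA mulKVmx //.
  rewrite mulVmx // mulmx1 -PT.
  by rewrite !mulmxA.
Qed.

Lemma Gamma_skew i {y} : O y -> (Gamma K e i y)^T = - Gamma K e i y.
Proof.
move=> Oy; rewrite /Gamma.
have [_ _ ->] := Te (coord_dir i) Oy.
set v := coord_dir i.
set P := invmx (e y); set e' := 'D_v e y; set K1 := 'D_v (fun x => K x y) y.
have Ks := Kd_split y v Oy; rewrite (Kd_e v Oy) (K2_T v Oy) -/K1 -/e' in Ks.
have [ue _ _ _ _] := frame_facts Hsym Hon Oy.
have PE : P *m e y = 1%:M by rewrite mulVmx.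
have T1 : P *m (e' *m (e y)^T) *m P^T = P *m e'.
  by rewrite mulmxA -mulmxA -trmx_mul PE trmx1 mulmx1.
have T2 : P *m (e y *m e'^T) *m P^T = e'^T *m P^T.
  by rewrite mulmxA PE mul1mx.
have H : P *m K1 *m P^T + P *m K1^T *m P^T = P *m e' + e'^T *m P^T.
  by rewrite -mulmxDl -mulmxDr -Ks mulmxDr mulmxDl T1 T2.
have H2 : P *m K1^T *m P^T = P *m e' + e'^T *m P^T - P *m K1 *m P^T.
  by rewrite -H addrAC subrr add0r.
have XT : (- (P *m e') + P *m K1 *m P^T)^T = - (e'^T *m P^T) + P *m K1^T *m P^T.
  by rewrite raddfD raddfN /= !trmx_mul trmxK mulmxA.
by rewrite opprK raddfN /= XT H2 zid.
Qed.

Lemma compat s t i {y} : smooth_on O s -> smooth_on O t -> O y ->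
  'D_(coord_dir i) (fun x => (s x)^T *m t x) y =
  (covD K e i s y)^T *m t y + (s y)^T *m covD K e i t y.
Proof.
move=> Hs Ht Oy.
have ds : derivable s y (coord_dir i) by have [_ [d _]] := Hs 1%N; apply: d.
have dt : derivable t y (coord_dir i) by have [_ [d _]] := Ht 1%N; apply: d.
have [d1 D1] := dtrmx ds.
have [_ D2] := dmulmx d1 dt.
rewrite D2 D1 /covD raddfD /= trmx_mul (Gamma_skew i Oy).
rewrite mulmxDl mulmxDr mulmxN mulNmx !mulmxA.
exact: zid2.
Qed.

Lemma gauge g i {y} : smooth_on O g -> (forall x, O x -> (g x)^T *m g x = 1%:M) ->
  O y ->
  Gamma K (fun x => e x *m g x) i y =
  invmx (g y) *m 'D_(coord_dir i) g y + invmx (g y) *m Gamma K e i y *m g y.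
Proof.
move=> Hg Hgo Oy; rewrite /Gamma.
set v := coord_dir i.
have dg : derivable g y v by have [_ [d _]] := Hg 1%N; apply: d.
have [dT T1 _] := Te v Oy.
have ginv : forall x, O x -> invmx (g x) = (g x)^T.
  by move=> x Ox; apply: inv_eq (Hgo x Ox).
have E : \forall x \near y, tunneling_frame K (fun x => e x *m g x) x y =
     (g x)^T *m tunneling_frame K e x y *m g y.
  apply: filterS (nO Oy) => x Ox.
  have [ue _ _ _ _] := frame_facts Hsym Hon Ox.
  have IE : invmx (e x *m g x) = (g x)^T *m invmx (e x).
    apply: inv_eq.
    by rewrite -mulmxA (mulmxA (invmx (e x))) mulVmx // mul1mx Hgo.
  by rewrite /tunneling_frame IE !mulmxA.
rewrite (near_eq_derive _ E).
have [dgT DgT] := dtrmx dg.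
have [d1 D1] := dmulmx dgT dT.
have dc : derivable (fun _ : 'rV[R]_n => g y) y v := derivable_cst (g y) y v.
have [_ D2] := dmulmx d1 dc.
cbv beta in D2.
have C0 : 'D_v (fun _ : 'rV[R]_n => g y) y = 0 := derive_cst (g y) y v.
have Z : 'D_v (fun x => (g x)^T *m g x) y = 0.
  rewrite (@near_eq_derive _ _ _ _ (cst 1%:M)) ?derive_cst //.
  by apply: filterS (nO Oy) => x Ox; rewrite Hgo.
have [_ DZ] := dmulmx dgT dg.
rewrite DZ DgT in Z; move/eqP: Z; rewrite addr_eq0 => /eqP Z.
rewrite D2 C0 mulmx0 addr0 D1 DgT T1 mulmx1 mulmxDl Z !ginv //.
by rewrite mulmxN mulNmx opprD !opprK.
Qed.

End Main.

Theorem proposition2p1 (R : realType) (n r : nat) (O : set 'rV[R]_n)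
  (K : 'rV[R]_n -> 'rV[R]_n -> 'M[R]_r) (e : 'rV[R]_n -> 'M[R]_r) :
  open O ->
  smooth_on (O `*` O) (fun p : 'rV[R]_n * 'rV[R]_n => K p.1 p.2) ->
  (forall x y, O x -> O y -> (K x y)^T = K y x) ->
  (forall x, O x -> posdef (K x x)) ->
  smooth_on O e ->
  orthonormal_frame K O e ->
  (* Gamma_i(e) is skew-symmetric *)
  (forall (i : 'I_n) y, O y -> (Gamma K e i y)^T = - Gamma K e i y) /\
  (* d + Gamma is compatible with (.,.)_C (the standard dot product in the
     orthonormal frame e) *)
  (forall s t : 'rV[R]_n -> 'cV[R]_r, smooth_on O s -> smooth_on O t ->
     forall (i : 'I_n) y, O y ->
       'D_(coord_dir i) (fun x => (s x)^T *m t x) y =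
       (covD K e i s y)^T *m t y + (s y)^T *m covD K e i t y) /\
  (* gauge transformation law under any smooth g : O -> O(r) *)
  (forall g : 'rV[R]_n -> 'M[R]_r, smooth_on O g ->
     (forall x, O x -> (g x)^T *m g x = 1%:M) ->
     forall (i : 'I_n) y, O y ->
       Gamma K (fun x => e x *m g x) i y =
       invmx (g y) *m 'D_(coord_dir i) g y + invmx (g y) *m Gamma K e i y *m g y).
Proof.
move=> Oo HK Hsym Hpos He Hon.
split; [|split].
- by move=> i y Oy; exact: (@Gamma_skew R n r O K e Oo HK Hsym He Hon i y Oy).
- by move=> s t Hs Ht i y Oy; exact: (@compat R n r O K e Oo HK Hsym He Hon s t i y Hs Ht Oy).
- by move=> g Hg Hgo i y Oy; exact: (@gauge R n r O K e Oo HK Hsym He Hon g i y Hg Hgo Oy).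
Qed.
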